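(* A tree $T$ is compact Hausdorff in the coarse wedge topology if and only if $T$ is chain-complete and has finitely many minimal elements.
   Context: A tree is a partially ordered set in which the set of predecessors of each element is well-ordered. Levels: $T(0)$ is the set of minimal elements; $T(\alpha)$ is the set of minimal elements of $T\setminus\bigcup_{\beta<\alpha}T(\beta)$; an element is on a successor level if it lies in $T(\alpha+1)$ for some $\alpha$. $T$ is chain-complete if every nonempty chain has a supremum (least upper bound) in $T$. For $t\in T$, $V_t=\{s\in T:s\ge t\}$. The coarse wedge topology has subbase all $V_t$ and $T\setminus V_t$ with $t$ minimal or on a successor level. *)

(* Defs.v *)
From HB Require Import structures.
From mathcomp Require Import all_boot all_order.
From mathcomp Require Import all_classical all_reals all_analysis.

Set Implicit Arguments.
Unset Strict Implicit.
Unset Printing Implicit Defensive.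

Import Order.TTheory.
Local Open Scope order_scope.
Local Open Scope classical_set_scope.

Section Trees.
Context {d : Order.disp_t} (T : porderType d).

Definition is_tree : Prop :=
  forall t : T,
    (forall x y : T, x < t -> y < t -> x <= y \/ y <= x) /\
    (forall A : set T, A !=set0 -> A `<=` [set s | s < t] ->
       exists2 m, A m & forall a, A a -> m <= a).

Definition tree_minimal (t : T) : Prop := forall s : T, s <= t -> s = t.

(* t lies on a successor level T(alpha+1): its set of predecessors (whose
   order type is the level of t) has a largest element. *)
Definition successor_level (t : T) : Prop :=
  exists2 p : T, p < t & forall s : T, s < t -> s <= p.

Definition wedge (t : T) : set T := [set s | t <= s].

Definition is_chain (A : set T) : Prop :=
  forall x y, A x -> A y -> x <= y \/ y <= x.

Definition is_supremum (A : set T) (s : T) : Prop :=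
  (forall a, A a -> a <= s) /\ (forall u, (forall a, A a -> a <= u) -> s <= u).

Definition chain_complete : Prop :=
  forall A : set T, A !=set0 -> is_chain A -> exists s, is_supremum A s.

End Trees.

Definition coarse_wedge {d : Order.disp_t} (T : porderType d) : Type := T.

(* Index type of the subbase: None (unused, gives the point) or (t, b) where
   (t, true) |-> V_t and (t, false) |-> T \ V_t. *)
Definition cw_index (T : Type) : Type := option (T * bool).

Section CoarseWedge.
Context {d : Order.disp_t} (T : porderType d).

HB.instance Definition _ := Choice.on (coarse_wedge T).
HB.instance Definition _ := Choice.on (cw_index T).
HB.instance Definition _ := isPointed.Build (cw_index T) None.

Definition cw_dom : set (cw_index T) :=
  [set i | exists t b, i = Some (t, b) /\ (tree_minimal t \/ successor_level t)].

Definition cw_sub (i : cw_index T) : set (coarse_wedge T) :=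
  match i with
  | Some (t, true) => wedge t
  | Some (t, false) => ~` wedge t
  | None => setT
  end.

HB.instance Definition _ :=
  @isSubBaseTopological.Build (coarse_wedge T) (cw_index T) cw_dom cw_sub.

End CoarseWedge.

(* Main.v *)
Require Import Defs.
From HB Require Import structures.
From mathcomp Require Import all_boot all_order.
From mathcomp Require Import all_classical all_reals all_analysis.
From mathcomp Require Import finmap.
Set Implicit Arguments.
Unset Strict Implicit.
Unset Printing Implicit Defensive.
Local Open Scope classical_set_scope.
Import Order.TTheory.
Local Open Scope order_scope.

Section S.
Context (d : Order.disp_t) (T : porderType d).
Local Notation X := (coarse_wedge T).

Lemma cw_nbhsP (x : X) (A : set X) : nbhs x A <->
  exists D' : {fset cw_index T}, [/\ (forall i, i \in D' -> cw_dom i),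
     (forall i, i \in D' -> cw_sub i x) &
     \bigcap_(i in [set` D']) cw_sub i `<=` A].
Proof.
rewrite nbhsE /=; split.
  move=> [_ [[B sB <-] [C BC Ct] sUBA]].
  have [D sD IDeC] := sB _ BC.
  exists D; split.
  - by move=> i /sD /set_mem.
  - by move=> i iD; move: Ct; rewrite -IDeC; apply.
  - by move=> y Dy; apply: sUBA; exists C => //; rewrite -IDeC.
move=> [D [sD Dx sDA]].
exists (\bigcap_(i in [set` D]) cw_sub i) => //; split => //.
  exists [set \bigcap_(i in [set` D]) cw_sub i].
    move=> _ ->; exists D => // i /sD; rewrite in_setE; exact.
  by rewrite bigcup_set1.
Qed.

Lemma cw_nbhs_sub (x : X) (i : cw_index T) : cw_dom i -> cw_sub i x ->
  nbhs x (cw_sub i).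
Proof.
move=> Di ix; apply/cw_nbhsP; exists [fset i]%fset; split.
- by move=> j; rewrite inE => /eqP ->.
- by move=> j; rewrite inE => /eqP ->.
- by move=> y Hy; apply: Hy; rewrite /= inE.
Qed.

Lemma cw_open (i : cw_index T) : cw_dom i -> open (cw_sub i : set X).
Proof.
move=> Di; rewrite openE => y Hy; exact: cw_nbhs_sub.
Qed.

Lemma cw_cvg (F : set_system X) (x : X) : Filter F ->
  (forall i, cw_dom i -> cw_sub i x -> F (cw_sub i)) -> F --> x.
Proof.
move=> FF H A /cw_nbhsP [D [sD Dx DA]].
apply: filterS DA _; apply: filter_bigI => i iD.
by apply: H; [exact: sD|exact: Dx].
Qed.

Hypothesis HT : is_tree T.

Definition nl (t : T) := tree_minimal t \/ successor_level t.

Lemma cmp_below (a b x : T) : a <= x -> b <= x -> a <= b \/ b <= a.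
Proof.
move=> ax bx.
case: (eqVneq a x) => [->|nax]; first by right.
case: (eqVneq b x) => [->|nbx]; first by left.
apply: (HT x).1; by rewrite lt_neqAle ?nax ?nbx.
Qed.

Lemma not_min (t : T) : ~ tree_minimal t -> exists s, s < t.
Proof.
move=> ntm; move/existsNP: ntm => [s /not_implyP [st nst]].
by exists s; rewrite lt_neqAle st andbT; apply/eqP.
Qed.

Lemma min_below (t : T) : exists2 m, tree_minimal m & m <= t.
Proof.
case: (pselect (tree_minimal t)) => [tm|ntm]; first by exists t.
have [s st] := not_min ntm.
have [m mt mmin] := (HT t).2 [set y | y < t] (ex_intro _ s st) (fun _ h => h).
exists m; last exact: ltW.
move=> y ym; apply: le_anti; rewrite ym /=; apply: mmin.
exact: le_lt_trans ym mt.
Qed.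

Lemma wo_le (t : T) (A : set T) : A !=set0 -> (forall a, A a -> a <= t) ->
  exists2 m, A m & forall a, A a -> m <= a.
Proof.
move=> [a0 Aa0] At.
case: (pselect (exists y, A y /\ y != t)) => [[y [Ay yt]]|nA].
  have [m [Am mt] mmin] := (HT t).2 [set y | A y /\ y != t]
     (ex_intro _ y (conj Ay yt)) (fun a ha => ltac:(rewrite /= lt_neqAle ha.2 At //; exact: ha.1)).
  exists m => // a Aa; case: (eqVneq a t) => [->|nat].
    by apply: At.
  exact: mmin.
have eqt : forall a, A a -> a = t.
  by move=> a Aa; apply/eqP; apply: contra_notP nA => h; exists a; split => //; apply/negP.
exists t; first by rewrite -(eqt a0 Aa0).
by move=> a /eqt ->.
Qed.

Definition PP := forall m x : T, ~ nl m -> (forall s, s < m -> s <= x) -> m <= x.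

Lemma sepP (HP : PP) (a x : T) : ~ a <= x -> exists m, [/\ nl m, m <= a & ~ m <= x].
Proof.
move=> nax.
have [m [ma mx] mmin] := wo_le (A := [set y | y <= a /\ ~ y <= x])
  (ex_intro _ a (conj (lexx a) nax)) (fun _ h => h.1).
case: (pselect (nl m)) => [nlm|nnlm]; first by exists m.
exfalso; apply: mx; apply: (HP m x nnlm) => s sm.
case: (pselect (s <= x)) => // nsx; exfalso.
move: (mmin s (conj (le_trans (ltW sm) ma) nsx)).
by rewrite (lt_geF sm).
Qed.

Lemma CC_PP : chain_complete T -> PP.
Proof.
move=> CC m x nnl H.
case: (pselect (m <= x)) => // nmx; exfalso.
have [s0 s0m] : exists s, s < m.
  by apply: not_min => mm; apply: nnl; left.
have [u [uup uleast]] := CC [set s | s < m] (ex_intro _ s0 s0m)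
  (fun a b ha hb => (HT m).1 a b ha hb).
have um : u <= m by apply: uleast => a /ltW.
have ux : u <= x by apply: uleast.
case: (eqVneq u m) => [eum|num]; first by apply: nmx; rewrite -eum.
apply: nnl; right; exists u; first by rewrite lt_neqAle num um.
exact: uup.
Qed.

Lemma seq_bound (m s0 : T) (s0m : s0 < m) (s : seq (cw_index T)) :
  (forall t, Some (t, true) \in s -> t < m) ->
  exists z, z < m /\ forall t, Some (t, true) \in s -> t <= z.
Proof.
elim: s => [|i s IH] H.
  by exists s0; split => // t; rewrite in_nil.
have [z [zm zH]] : exists z, z < m /\ forall t, Some (t, true) \in s -> t <= z.
  by apply: IH => t ts; apply: H; rewrite in_cons ts orbT.
case: i H => [[t [|]]|] H; last first.
- by exists z; split => // t'; rewrite in_cons => /orP[/eqP//|/zH].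
- by exists z; split => // t'; rewrite in_cons => /orP[/eqP[]//|/zH].
have tm : t < m by apply: H; rewrite in_cons eqxx.
have [tz|zt] := (HT m).1 t z tm zm.
  exists z; split => // t'; rewrite in_cons => /orP[/eqP [->]//|/zH //].
exists t; split => // t'; rewrite in_cons => /orP[/eqP [->]//|/zH tz].
exact: le_trans tz zt.
Qed.

Lemma Haus_PP : hausdorff_space X -> PP.
Proof.
move=> Hh m x nnl H.
case: (pselect (m <= x)) => // nmx; exfalso.
have [s0 s0m] : exists s, s < m.
  by apply: not_min => mm; apply: nnl; left.
have nsucc : forall p, p < m -> (forall s, s < m -> s <= p) -> False.
  by move=> p pm hp; apply: nnl; right; exists p.
have nxm : ~ x < m by move=> xm; exact: nsucc x xm H.
have [x0 [x0x x0m] x0min] := wo_le (A := [set y | y <= x /\ ~ y < m])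
  (ex_intro _ x (conj (lexx x) nxm)) (fun _ h => h.1).
have C1 : forall s, s < x0 -> s < m.
  move=> s sx0; case: (pselect (s < m)) => // nsm; exfalso.
  move: (x0min s (conj (le_trans (ltW sx0) x0x) nsm)).
  by rewrite (lt_geF sx0).
have C2 : forall c, c < m -> c < x0.
  move=> c cm.
  have [cx0|x0c] := cmp_below (H c cm) x0x.
    rewrite lt_neqAle cx0 andbT; apply/eqP => e; apply: x0m; by rewrite -e.
  by exfalso; apply: x0m; exact: le_lt_trans x0c cm.
have x0nl : ~ nl x0.
  case=> [x0min'|[p px0 hp]].
    have := x0min' s0 (ltW (C2 _ s0m)) => e.
    by have := C2 _ s0m; rewrite e ltxx.
  apply: (nsucc p (C1 _ px0)) => s sm; exact: hp (C2 _ sm).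
have mx0 : m <> x0 by move=> e; apply: nmx; rewrite e.
apply: mx0; apply: Hh.
move=> U V /cw_nbhsP [D1 [s1 x1 U1]] /cw_nbhsP [D2 [s2 x2 V2]].
have memU : forall i, (i \in enum_fset (D1 `|` D2)%fset) = (i \in D1) || (i \in D2).
  by move=> i; rewrite -in_fsetU.
have hb : forall t, Some (t, true) \in enum_fset (D1 `|` D2)%fset -> t < m.
  move=> t; rewrite memU => /orP[tD|tD].
  - have tm : t <= m := x1 _ tD.
    rewrite lt_neqAle tm andbT; apply/eqP => e; apply: nnl; rewrite -e.
    by have [t' [b' [[<- _] nlt]]] := s1 _ tD.
  - have tm : t <= x0 := x2 _ tD.
    apply: C1; rewrite lt_neqAle tm andbT; apply/eqP => e; apply: x0nl; rewrite -e.
    by have [t' [b' [[<- _] nlt]]] := s2 _ tD.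
have [z [zm zH]] := seq_bound s0m hb.
exists z; split.
- apply: U1 => i iD; have [t [b [ei nlt]]] := s1 _ iD; subst i.
  case: b iD => iD /=.
    by apply: zH; rewrite memU iD.
  move=> tz; apply: (x1 _ iD); exact: le_trans tz (ltW zm).
- apply: V2 => i iD; have [t [b [ei nlt]]] := s2 _ iD; subst i.
  case: b iD => iD /=.
    by apply: zH; rewrite memU iD orbT.
  move=> tz; apply: (x2 _ iD); exact: le_trans tz (ltW (C2 _ zm)).
Qed.

Lemma fwd_cc : compact [set: X] -> hausdorff_space X -> chain_complete T.
Proof.
move=> Hc Hh; have HP := Haus_PP Hh.
move=> A [a0 Aa0] Ach.
pose F := filter_from A (fun a => wedge a : set X).
have FF : ProperFilter F.
  apply: filter_from_proper; last by move=> i _; exists i; rewrite /wedge /=.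
  apply: filter_from_filter; first by exists a0.
  move=> i j Ai Aj; have [ij|ji] := Ach i j Ai Aj.
    by exists j => // y yj; split => //; exact: le_trans ij yj.
  by exists i => // y yi; split => //; exact: le_trans ji yi.
have [x [_ clx]] := Hc F FF filterT.
have xub : forall a, A a -> a <= x.
  move=> a Aa; case: (pselect (a <= x)) => // nax; exfalso.
  have [m [nlm ma nmx]] := sepP HP nax.
  have Nx : nbhs x (cw_sub (Some (m, false))).
    by apply: cw_nbhs_sub => //; exists m, false.
  have Fa : F (wedge a) by exists a.
  have [y [ay nmy]] := clx _ _ Fa Nx.
  by apply: nmy; exact: le_trans ma ay.
have [s [sx sub] smin] := wo_le (A := [set y | y <= x /\ forall a, A a -> a <= y])
  (ex_intro _ x (conj (lexx x) xub)) (fun _ h => h.1).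
exists s; split => // u uub.
case: (pselect (s <= u)) => // nsu; exfalso.
have [m [nlm ms nmu]] := sepP HP nsu.
have am : forall a, A a -> a <= m.
  move=> a Aa; have [//|ma] := cmp_below (sub a Aa) ms.
  by exfalso; apply: nmu; exact: le_trans ma (uub a Aa).
have sm : s <= m := smin m (conj (le_trans ms sx) am).
have ems : m = s by apply: le_anti; rewrite ms sm.
subst m.
case: nlm => [smin'|[p ps hp]].
  have e := smin' a0 (sub a0 Aa0); apply: nsu; rewrite -e; exact: uub.
have Bp : p <= x /\ forall a, A a -> a <= p.
  split; first exact: le_trans (ltW ps) sx.
  move=> a Aa; apply: hp; rewrite lt_neqAle sub // andbT.
  apply/eqP => e; apply: nsu; rewrite -e; exact: uub.
by move: (smin p Bp); rewrite (lt_geF ps).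
Qed.

Lemma fwd_fin : compact [set: X] -> finite_set [set t : T | tree_minimal t].
Proof.
move=> Hc.
case: (pselect (finite_set [set t : T | tree_minimal t])) => // inf; exfalso.
pose B := fun S : {fset T} => [set y : X | forall m, m \in S -> ~ m <= y].
pose F := filter_from [set: {fset T}] B.
have FF : ProperFilter F.
  apply: filter_from_proper; last first.
    move=> S _; case: (pselect ([set t : T | tree_minimal t] `<=` [set` S])) => [sub|nsub].
      by exfalso; apply: inf; exact: (finite_subfset S).
    move/existsNP: nsub => [m /not_implyP [mm mS]].
    exists m => m' m'S m'm; apply: mS; by rewrite -(mm m' m'm).
  apply: filter_from_filter; first by exists fset0.
  move=> S S' _ _; exists (S `|` S')%fset => // y Hy; split => m mS.
    by apply: Hy; rewrite in_fsetU mS.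
  by apply: Hy; rewrite in_fsetU mS orbT.
have [x [_ clx]] := Hc F FF filterT.
have [m mm mx] := min_below x.
have Nx : nbhs x (cw_sub (Some (m, true))).
  by apply: cw_nbhs_sub => //; exists m, true; split => //; left.
have FB : F (B [fset m]%fset) by exists [fset m]%fset.
have [y [By my]] := clx _ _ FB Nx.
by apply: (By m); rewrite ?inE.
Qed.

Lemma bwd_haus : chain_complete T -> hausdorff_space X.
Proof.
move=> CC; have HP := CC_PP CC.
move=> p q cl; case: (pselect (p = q)) => // npq; exfalso.
case: (pselect (p <= q)) => [pq|npq'].
  have nqp : ~ q <= p by move=> qp; apply: npq; apply: le_anti; rewrite pq qp.
  have [m [nlm mq nmp]] := sepP HP nqp.
  have Np : nbhs p (cw_sub (Some (m, false))).
    by apply: cw_nbhs_sub => //; exists m, false.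
  have Nq : nbhs q (cw_sub (Some (m, true))).
    by apply: cw_nbhs_sub => //; exists m, true.
  have [y [nmy my]] := cl _ _ Np Nq.
  exact: nmy my.
have [m [nlm mp nmq]] := sepP HP npq'.
have Np : nbhs p (cw_sub (Some (m, true))).
  by apply: cw_nbhs_sub => //; exists m, true.
have Nq : nbhs q (cw_sub (Some (m, false))).
  by apply: cw_nbhs_sub => //; exists m, false.
have [y [my nmy]] := cl _ _ Np Nq.
exact: nmy my.
Qed.

Lemma bwd_compact : chain_complete T -> finite_set [set t : T | tree_minimal t] ->
  compact [set: X].
Proof.
move=> CC FM; rewrite compact_ultra => F UF _.
have [m0 [m0min Fm0]] : exists m, tree_minimal m /\ F (wedge m).
  case: (pselect (exists m, tree_minimal m /\ F (wedge m))) => // H; exfalso.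
  have Fc : forall m, tree_minimal m -> F (~` (wedge m : set X)).
    move=> m mm; have [Fm|//] := in_ultra_setVsetC (wedge m : set X) UF.
    by exfalso; apply: H; exists m.
  have [Xs eXs] := finite_fsetP.1 FM.
  have FI : F (\bigcap_(i in [set` Xs]) ~` (wedge i : set X)).
    apply: filter_bigI => i iX; apply: Fc.
    by have : [set` Xs] i by []; rewrite -eXs.
  have [y Hy] := filter_ex FI.
  have [m mm my] := min_below y.
  have : [set` Xs] m by rewrite -eXs.
  by move=> /Hy; apply.
pose C := [set t | nl t /\ F (wedge t)].
have Cch : is_chain C.
  move=> t t' [_ Ft] [_ Ft'].
  have [y [ty t'y]] := filter_ex (filterI Ft Ft').
  exact: cmp_below ty t'y.
have [x [xup xleast]] := CC C (ex_intro _ m0 (conj (or_introl m0min) Fm0)) Cch.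
exists x; split => //.
apply: cw_cvg => i [t [b [-> nlt]]]; case: b => /= tx.
  case: (pselect (F (wedge t))) => // nFt; exfalso.
  have cle : forall c, C c -> c <= t.
    move=> c Cc; have [//|tc] := cmp_below (xup c Cc) tx.
    by exfalso; apply: nFt; apply: filterS (Cc.2) => y cy; exact: le_trans tc cy.
  have ext : x = t by apply: le_anti; rewrite tx xleast.
  subst x.
  have nCt : ~ C t by case.
  case: nlt => [tmin|[p pt hp]].
    have e := tmin m0 (xup m0 (conj (or_introl m0min) Fm0)).
    by apply: nCt; rewrite -e; split => //; left.
  have pub : forall c, C c -> c <= p.
    move=> c Cc; apply: hp; rewrite lt_neqAle cle // andbT.
    by apply/eqP => e; apply: nCt; rewrite -e.
  by move: (xleast p pub); rewrite (lt_geF pt).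
have [Ft|//] := in_ultra_setVsetC (wedge t : set X) UF.
by exfalso; apply: tx; apply: xup.
Qed.

End S.

Theorem corollary3p5 (d : Order.disp_t) (T : porderType d) (HT : is_tree T) :
  (compact [set: coarse_wedge T] /\ hausdorff_space (coarse_wedge T)) <->
  (chain_complete T /\ finite_set [set t : T | tree_minimal t]).
Proof.
split=> [[Hc Hh]|[CC FM]].
  by split; [exact: fwd_cc|exact: fwd_fin].
by split; [exact: bwd_compact|exact: bwd_haus].
Qed.
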